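(* Let $\Sigma$ be a theory and let $A,B \subseteq \mathcal{T}_Y$ be finite. Then $B \subseteq A_\Sigma^{\omega}$ if and only if $\Sigma \vdash A \Rightarrow B$.
   Context: $Y$ is a non-empty finite set of attributes and $\mathcal{T}_Y = \{y^i \mid y \in Y, i \in \mathbb{Z}\}$; $M + j = \{y^{i+j} \mid y^i \in M\}$. A formula is $A \Rightarrow B$ with $A,B$ finite subsets of $\mathcal{T}_Y$; a theory is a set of formulas. Syntactic closure: for $M \subseteq \mathcal{T}_Y$, $M_\Sigma^0 = M$, $M_\Sigma^{n+1} = M_\Sigma^n \cup \bigcup\{F+i \mid E \Rightarrow F \in \Sigma, i \in \mathbb{Z}, E+i \subseteq M_\Sigma^n\}$, and $M_\Sigma^\omega = \bigcup_{n=0}^\infty M_\Sigma^n$. Deduction rules (for arbitrary finite $A,B,C,D \subseteq \mathcal{T}_Y$, $i \in \mathbb{Z}$): (Ax) infer $A \cup B \Rightarrow A$; (Cut) from $A \Rightarrow B$ and $B \cup C \Rightarrow D$ infer $A \cup C \Rightarrow D$; (Shf) from $A \Rightarrow B$ infer $A+i \Rightarrow B+i$. A proof of $A \Rightarrow B$ by $\Sigma$ is a finite sequence of formulas ending with $A \Rightarrow B$ in which each member is in $\Sigma$ or is the conclusion of a rule whose hypotheses occur earlier; $\Sigma \vdash A \Rightarrow B$ means such a proof exists. *)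

(* Defs.v *)
From HB Require Import structures.
From mathcomp Require Import all_boot all_order all_algebra.
From mathcomp Require Import finmap.
Set Implicit Arguments. Unset Strict Implicit. Unset Printing Implicit Defensive.
Local Open Scope fset_scope.

(* Y : nonempty finite set of attributes (a finType with an inhabitant).
   Temporal attributes y^i are pairs (y, i) with i : int. *)
Definition tattr (Y : finType) := (Y * int)%type.

Definition formula (Y : finType) := ({fset tattr Y} * {fset tattr Y})%type.

Definition theory (Y : finType) := formula Y -> Prop.

Definition fshift (Y : finType) (M : {fset tattr Y}) (j : int) : {fset tattr Y} :=
  [fset (x.1, (x.2 + j)%R) | x in M].

Definition pshift (Y : finType) (M : tattr Y -> Prop) (j : int) : tattr Y -> Prop :=
  fun t => exists2 x, M x & t = (x.1, (x.2 + j)%R).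

Fixpoint closure_n (Y : finType) (Sigma : theory Y) (M : tattr Y -> Prop) (n : nat)
  : tattr Y -> Prop :=
  match n with
  | 0 => M
  | n'.+1 => fun t =>
      closure_n Sigma M n' t \/
      exists (E F : {fset tattr Y}) (i : int),
        [/\ Sigma (E, F),
            (forall e, e \in fshift E i -> closure_n Sigma M n' e)
          & t \in fshift F i]
  end.

Definition closure_omega (Y : finType) (Sigma : theory Y) (M : tattr Y -> Prop)
  : tattr Y -> Prop :=
  fun t => exists n, closure_n Sigma M n t.

Definition rule_Ax (Y : finType) (phi : formula Y) : Prop :=
  exists A B : {fset tattr Y}, phi = (A `|` B, A).

Definition rule_Cut (Y : finType) (h1 h2 phi : formula Y) : Prop :=
  exists A B C D : {fset tattr Y},
    [/\ h1 = (A, B), h2 = (B `|` C, D) & phi = (A `|` C, D)].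

Definition rule_Shf (Y : finType) (h phi : formula Y) : Prop :=
  exists (A B : {fset tattr Y}) (i : int),
    h = (A, B) /\ phi = (fshift A i, fshift B i).

Definition is_proof (Y : finType) (Sigma : theory Y) (s : seq (formula Y)) : Prop :=
  forall k, k < size s ->
    let phi := nth (fset0, fset0) s k in
    [\/ Sigma phi,
        rule_Ax phi,
        (exists j1 j2, [/\ j1 < k, j2 < k &
            rule_Cut (nth (fset0, fset0) s j1) (nth (fset0, fset0) s j2) phi])
      | (exists j, j < k /\ rule_Shf (nth (fset0, fset0) s j) phi)].

Definition provable (Y : finType) (Sigma : theory Y) (phi : formula Y) : Prop :=
  exists s : seq (formula Y), is_proof Sigma s /\ s <> [::] /\ last (fset0, fset0) s = phi.

(* Main.v *)
Require Import Defs.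
From mathcomp Require Import all_boot all_order all_algebra.
From mathcomp Require Import finmap zify.
Set Implicit Arguments. Unset Strict Implicit. Unset Printing Implicit Defensive.
Local Open Scope fset_scope.

Section S.
Variable (Y : finType) (Sigma : theory Y).
Notation T := (tattr Y).
Notation fm := (formula Y).

Lemma fshiftP (X : {fset T}) j t :
  reflect (exists2 x, x \in X & t = (x.1, (x.2 + j)%R)) (t \in fshift X j).
Proof.
apply: (iffP idP) => [|[x Hx ->]]; first by move/imfsetP => /= [x Hx ->]; exists x.
by apply/imfsetP; exists x.
Qed.

Lemma fshift_mem (X : {fset T}) j x : x \in X -> (x.1, (x.2 + j)%R) \in fshift X j.
Proof. by move=> Hx; apply/fshiftP; exists x. Qed.

Lemma fshift0 (X : {fset T}) t : (t \in fshift X 0) = (t \in X).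
Proof.
apply/fshiftP/idP => [[x Hx ->]|Ht]; first by rewrite GRing.addr0 -surjective_pairing.
by exists t => //; rewrite GRing.addr0 -surjective_pairing.
Qed.

Lemma fshiftU (X Z : {fset T}) j t :
  (t \in fshift (X `|` Z) j) = (t \in fshift X j) || (t \in fshift Z j).
Proof.
apply/fshiftP/orP => [[x]|[]/fshiftP[x Hx ->]]; last 2 first.
- by exists x => //; rewrite in_fsetU Hx.
- by exists x => //; rewrite in_fsetU Hx orbT.
by rewrite in_fsetU => /orP[] Hx ->; [left|right]; apply: fshift_mem.
Qed.

Lemma fshift_comp (X : {fset T}) j i t :
  (t \in fshift (fshift X j) i) = (t \in fshift X (j + i)%R).
Proof.
apply/fshiftP/fshiftP => [[y /fshiftP[x Hx ->] ->]|[x Hx ->]].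
  by exists x => //=; rewrite GRing.addrA.
by exists (x.1, (x.2 + j)%R); [apply: fshift_mem|rewrite /= GRing.addrA].
Qed.


Notation nth0 := (nth (fset0, fset0)).

Definition justified (s : seq fm) (phi : fm) :=
  [\/ Sigma phi, rule_Ax phi,
      (exists j1 j2, [/\ j1 < size s, j2 < size s &
            rule_Cut (nth0 s j1) (nth0 s j2) phi])
    | (exists j, j < size s /\ rule_Shf (nth0 s j) phi)].

Lemma proof_rcons s phi : is_proof Sigma s -> justified s phi ->
  is_proof Sigma (rcons s phi).
Proof.
move=> Hs Hphi k; rewrite size_rcons ltnS leq_eqVlt => /orP[/eqP->|Hk] /=.
  rewrite nth_rcons ltnn eqxx.
  case: Hphi => [H|H|[j1 [j2 [H1 H2 H3]]]|[j [H1 H2]]].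
  - by apply: Or41.
  - by apply: Or42.
  - by apply: Or43; exists j1, j2; rewrite !nth_rcons H1 H2.
  - by apply: Or44; exists j; rewrite !nth_rcons H1.
rewrite nth_rcons Hk.
case: (Hs k Hk) => [H|H|[j1 [j2 [H1 H2 H3]]]|[j [H1 H2]]].
- by apply: Or41.
- by apply: Or42.
- apply: Or43; exists j1, j2.
  by rewrite !nth_rcons (ltn_trans H1 Hk) (ltn_trans H2 Hk).
- by apply: Or44; exists j; rewrite !nth_rcons (ltn_trans H1 Hk).
Qed.

Lemma proof_cat s1 s2 : is_proof Sigma s1 -> is_proof Sigma s2 ->
  is_proof Sigma (s1 ++ s2).
Proof.
move=> H1 H2 k; rewrite size_cat => Hk /=.
rewrite nth_cat; case: ltnP => Hks.
  case: (H1 k Hks) => [H|H|[j1 [j2 [Hj1 Hj2 H3]]]|[j [Hj1 H3]]].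
  - by apply: Or41.
  - by apply: Or42.
  - apply: Or43; exists j1, j2.
    by rewrite !nth_cat (ltn_trans Hj1 Hks) (ltn_trans Hj2 Hks).
  - by apply: Or44; exists j; rewrite !nth_cat (ltn_trans Hj1 Hks).
have Hk' : k - size s1 < size s2 by rewrite ltn_subLR // addnC.
case: (H2 _ Hk') => [H|H|[j1 [j2 [Hj1 Hj2 H3]]]|[j [Hj1 H3]]].
- by apply: Or41.
- by apply: Or42.
- apply: Or43; exists (j1 + size s1)%N, (j2 + size s1)%N.
  rewrite !nth_cat !ltnNge !leq_addl /= !addnK; split => //.
    lia.
  lia.
- apply: Or44; exists (j + size s1)%N.
  rewrite !nth_cat !ltnNge !leq_addl /= !addnK; split => //.
  lia.
Qed.

Lemma last_nth (s : seq fm) : s <> [::] -> last (fset0, fset0) s = nth0 s (size s).-1.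
Proof. by move=> _; rewrite nth_last. Qed.

Lemma prov_just phi : justified [::] phi -> provable Sigma phi.
Proof.
move=> H; exists [:: phi]; split; last by [].
have := proof_rcons (s:=[::]) (phi:=phi); apply => //.
Qed.

Lemma prov_sigma phi : Sigma phi -> provable Sigma phi.
Proof. by move=> H; apply: prov_just; apply: Or41. Qed.

Lemma prov_ax (A B : {fset T}) : provable Sigma (A `|` B, A).
Proof. by apply: prov_just; apply: Or42; exists A, B. Qed.

Lemma prov_cut (A B C D : {fset T}) : provable Sigma (A, B) ->
  provable Sigma (B `|` C, D) -> provable Sigma (A `|` C, D).
Proof.
move=> [s1 [P1 [N1 L1]]] [s2 [P2 [N2 L2]]].
exists (rcons (s1 ++ s2) (A `|` C, D)); split; last by split; [apply/eqP; rewrite -size_eq0 size_rcons | rewrite last_rcons].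
apply: proof_rcons; first exact: proof_cat.
apply: Or43; exists (size s1).-1, (size s1 + (size s2).-1)%N; split.
- have : 0 < size s1 by case: (s1) N1.
  rewrite size_cat; lia.
- have : 0 < size s2 by case: (s2) N2.
  rewrite size_cat; lia.
rewrite !nth_cat; case: (s1) N1 L1 => [//|x l] _ /= L1.
rewrite ltnSn.
have /= -> := nth_last (fset0, fset0) (x :: l).
rewrite L1 ltnNge leq_addr /= addKn nth_last L2.
by exists A, B, C, D.
Qed.

Lemma prov_shf (A B : {fset T}) i : provable Sigma (A, B) ->
  provable Sigma (fshift A i, fshift B i).
Proof.
move=> [s1 [P1 [N1 L1]]].
exists (rcons s1 (fshift A i, fshift B i)); split; last by split; [apply/eqP; rewrite -size_eq0 size_rcons | rewrite last_rcons].
apply: proof_rcons => //.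
apply: Or44; exists (size s1).-1; split; first by case: (s1) N1.
by rewrite nth_last L1; exists A, B, i.
Qed.


Lemma prov_eq (A B A' B' : {fset T}) : A = A' -> B = B' ->
  provable Sigma (A, B) -> provable Sigma (A', B').
Proof. by move=> -> ->. Qed.

Lemma prov_weakl (E E' D : {fset T}) : E `<=` E' ->
  provable Sigma (E, D) -> provable Sigma (E', D).
Proof.
move=> HE H.
have H1 := prov_ax E E'.
have H2 : provable Sigma (E `|` fset0, D) by rewrite fsetU0.
have := prov_cut H1 H2; rewrite fsetU0.
by apply: prov_eq => //; apply/fsetUidPr.
Qed.

Lemma prov_trans (A B E D : {fset T}) : provable Sigma (A, B) ->
  provable Sigma (E, D) -> E `<=` B `|` A -> provable Sigma (A, D).
Proof.
move=> H1 H2 HE.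
have H3 := prov_weakl HE H2.
by have := prov_cut H1 H3; rewrite fsetUid.
Qed.

Lemma prov_weakr (A X Z : {fset T}) : Z `<=` X ->
  provable Sigma (A, X) -> provable Sigma (A, Z).
Proof.
move=> HZ H; apply: (prov_trans H (E := X)); last exact: fsubsetUl.
have := prov_ax Z X; apply: prov_eq => //; exact/fsetUidPr.
Qed.

Lemma prov_union (A X Z : {fset T}) : provable Sigma (A, X) ->
  provable Sigma (A, Z) -> provable Sigma (A, X `|` Z).
Proof.
move=> HX HZ.
have HZ' : provable Sigma (A `|` X, Z) by apply: prov_weakl HZ; exact: fsubsetUl.
have H2 : provable Sigma (A `|` X, X `|` Z).
  apply: (prov_trans HZ' (E := X `|` Z)).
    by have := prov_ax (X `|` Z) fset0; rewrite fsetU0.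
  apply/fsubsetP => t; rewrite !in_fsetU => /orP[]->; by rewrite ?orbT.
apply: (prov_trans HX H2); rewrite fsetUC; exact: fsubset_refl.
Qed.

Lemma prov_empty (A : {fset T}) : provable Sigma (A, fset0).
Proof. by have := prov_ax fset0 A; rewrite fset0U. Qed.

Lemma prov_all (A : {fset T}) (s : seq T) :
  (forall t, t \in s -> provable Sigma (A, [fset t])) ->
  forall X : {fset T}, (forall t, t \in X -> t \in s) -> provable Sigma (A, X).
Proof.
elim: s => [|x s IH] H X HX.
  have -> : X = fset0 by apply/fsetP => t; rewrite in_fset0; apply/negbTE/negP => /HX.
  exact: prov_empty.
have Hs : forall t, t \in s -> provable Sigma (A, [fset t]).
  by move=> t Ht; apply: H; rewrite inE Ht orbT.
have HX' := IH Hs (X `\ x).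
have : provable Sigma (A, [fset x] `|` (X `\ x)).
  apply: prov_union; first by apply: H; rewrite inE eqxx.
  apply: HX' => t; rewrite in_fsetD1 => /andP[Ht /HX].
  by rewrite inE (negbTE Ht).
apply: prov_weakr; apply/fsubsetP => t Ht.
rewrite in_fsetU in_fset1 in_fsetD1 Ht andbT; by case: (t == x).
Qed.


Lemma complete_n (A : {fset T}) n t :
  closure_n Sigma (fun x => x \in A) n t -> provable Sigma (A, [fset t]).
Proof.
elim: n t => [|n IH] t /=.
  move=> Ht; have := prov_ax [fset t] A; apply: prov_eq => //.
  by apply/fsetUidPr; rewrite fsub1set.
case; first exact: IH.
move=> [E [F [i [HS HE HF]]]].
have HEA : provable Sigma (A, fshift E i).
  by apply: (prov_all (s := fshift E i)) => // e He; apply: IH; apply: HE.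
have HFA : provable Sigma (A, fshift F i).
  apply: (prov_trans HEA (prov_shf i (prov_sigma HS))); exact: fsubsetUl.
by apply: (prov_weakr _ HFA); rewrite fsub1set.
Qed.

Definition clo (M : T -> Prop) := closure_omega Sigma M.

Lemma closure_mono M n m t : n <= m -> closure_n Sigma M n t -> closure_n Sigma M m t.
Proof.
elim: m => [|m IH]; first by rewrite leqn0 => /eqP->.
rewrite leq_eqVlt => /orP[/eqP->//|]; rewrite ltnS => Hn H /=.
by left; apply: IH.
Qed.

Lemma closure_fin M (s : seq T) : (forall c, c \in s -> clo M c) ->
  exists n, forall c, c \in s -> closure_n Sigma M n c.
Proof.
elim: s => [|x s IH] H; first by exists 0.
have [n Hn] : clo M x by apply: H; rewrite inE eqxx.
have [m Hm] : exists m, forall c, c \in s -> closure_n Sigma M m c.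
  by apply: IH => c Hc; apply: H; rewrite inE Hc orbT.
exists (maxn n m) => c; rewrite inE => /orP[/eqP->|Hc].
  by apply: (closure_mono (leq_maxl n m)).
by apply: (closure_mono (leq_maxr n m)); apply: Hm.
Qed.

Lemma clo_closed M E F i : Sigma (E, F) ->
  (forall c, c \in fshift E i -> clo M c) -> forall d, d \in fshift F i -> clo M d.
Proof.
move=> HS HE d Hd.
have [n Hn] := closure_fin (s := fshift E i) HE.
by exists n.+1; right; exists E, F, i.
Qed.

Definition semS (phi : fm) := forall M i,
  (forall c, c \in fshift phi.1 i -> clo M c) -> forall d, d \in fshift phi.2 i -> clo M d.

Lemma sound s : is_proof Sigma s -> forall k, k < size s -> semS (nth0 s k).
Proof.
move=> Hs; elim/ltn_ind => k IH Hk.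
case: (Hs k Hk) => [H|[A [B ->]]|[j1 [j2 [Hj1 Hj2 [A [B [C [D [E1 E2 ->]]]]]]]]|[j [Hj [A [B [i' [E1 ->]]]]]]].
- move: H; case: (nth0 s k) => E F HS M i /=; exact: clo_closed.
- move=> M i /= H d Hd; apply: H; rewrite fshiftU Hd //.
- have S1 := IH _ Hj1 (ltn_trans Hj1 Hk); rewrite E1 in S1.
  have S2 := IH _ Hj2 (ltn_trans Hj2 Hk); rewrite E2 in S2.
  move=> M i /= H.
  have HB := S1 M i (fun c Hc => H c ltac:(by rewrite fshiftU Hc)).
  apply: S2 => c /=; rewrite fshiftU => /orP[/HB//|Hc].
  by apply: H; rewrite fshiftU Hc orbT.
- have S1 := IH _ Hj (ltn_trans Hj Hk); rewrite E1 in S1.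
  move=> M i /= H d; rewrite fshift_comp => Hd.
  apply: (S1 M (i' + i)%R) => // c /= Hc; apply: H; by rewrite fshift_comp.
Qed.

End S.

Theorem lemma4 (Y : finType) (y0 : Y) (Sigma : theory Y)
    (A B : {fset tattr Y}) :
  (forall t, t \in B -> closure_omega Sigma (fun x => x \in A) t)
  <-> provable Sigma (A, B).
Proof.
split.
  move=> H; apply: (prov_all (s := B)) => // t /H [n Hn].
  exact: complete_n Hn.
move=> [s [Ps [Ns Ls]]] t Ht.
have Hk : (size s).-1 < size s by case: (s) Ns.
have := sound Ps Hk; rewrite nth_last Ls => S.
apply: (S (fun x => x \in A) 0%R); last by rewrite fshift0.
by move=> c /=; rewrite fshift0 => Hc; exists 0.
Qed.
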